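(* Let $t_0>0$, $q>0$, let $\lambda:[t_0,+\infty[\to\,]0,+\infty[$ be continuous and let $\tau(t)=\frac{1}{q^q}\big(t_0+\int_{t_0}^t[\lambda(r)]^{1/q}dr\big)^q$ for $t\ge t_0$. Suppose there exist $C_0>0$ and real numbers $b>a\ge 0$ such that $$\int_{t_0}^t[\tau(r)]^a[\lambda(r)]^{-b}\,dr\le C_0\qquad\forall t\ge t_0 .$$ Then there exists $C_1>0$ such that $\tau(t)\ge C_1(t-t_0)^{\frac{qb+1}{b-a}}$ for all $t\ge t_0$. *)

(* Defs.v *)
From Stdlib Require Import Reals.
From Coquelicot Require Import Coquelicot.
Open Scope R_scope.

(* Real power x^y for x >= 0, y > 0, with the convention 0^y = 0.
   (Stdlib's Rpower 0 y = exp (y * ln 0) = 1, which is not the intended value.) *)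
Definition rpow0 (x y : R) : R :=
  if Rlt_dec 0 x then Rpower x y else 0.

Definition continuous_on_halfline (t0 : R) (f : R -> R) : Prop :=
  forall t, t0 <= t ->
    filterlim f (within (fun r => t0 <= r) (locally t)) (locally (f t)).

Definition tau (t0 q : R) (lam : R -> R) (t : R) : R :=
  / Rpower q q * Rpower (t0 + RInt (fun r => Rpower (lam r) (/ q)) t0 t) q.

(* Main.v *)
Require Import Defs.
From Stdlib Require Import Reals Lra.
From Coquelicot Require Import Coquelicot.
Open Scope R_scope.

Lemma Rpower_pos (x y : R) : 0 < Rpower x y.
Proof. unfold Rpower; apply exp_pos. Qed.

Lemma Rpower_mul2 (x y z : R) : 0 < x -> 0 < y -> Rpower (x*y) z = Rpower x z * Rpower y z.
Proof. intros; symmetry; apply Rpower_mult_distr; auto. Qed.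

Lemma bern (y s : R) : 0 < y -> 0 < s -> 1 + s - s * y <= Rpower y (-s).
Proof.
  intros Hy Hs. unfold Rpower.
  assert (H1 := exp_ineq1_le (- s * ln y)).
  assert (H2 : ln y <= y - 1).
  { rewrite <- (ln_exp (y-1)). apply ln_le; auto.
    assert (H3 := exp_ineq1_le (y-1)). lra. }
  nra.
Qed.

Lemma cont_Rpower (e x : R) : 0 < x -> continuous (fun x => Rpower x e) x.
Proof.
  intros Hx. apply (ex_derive_continuous (K:=R_AbsRing) (V:=R_NormedModule)). exists (e * Rpower x (e-1)).
  apply is_derive_Reals. apply derivable_pt_lim_power; auto.
Qed.

Lemma cont_ext (t0 : R) (lam : R -> R) : continuous_on_halfline t0 lam ->
  forall r, continuous (fun x => lam (Rmax t0 x)) r.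
Proof.
  intros H r. unfold continuous.
  eapply filterlim_comp. 2: apply (H (Rmax t0 r) (Rmax_l _ _)).
  intros P [eps HP]. exists eps. intros y Hy. apply HP. 2: apply Rmax_l.
  change (Rabs (Rmax t0 y - Rmax t0 r) < eps).
  change (Rabs (y - r) < eps) in Hy.
  unfold Rmax; destruct (Rle_dec t0 y); destruct (Rle_dec t0 r);
  apply Rabs_def1; apply Rabs_def2 in Hy; destruct Hy; try lra.
Qed.
Theorem mainTheorem2 (t0 q : R) (lam : R -> R) (C0 a b : R)
  (ht0 : 0 < t0) (hq : 0 < q)
  (hcont : continuous_on_halfline t0 lam)
  (hpos : forall t, t0 <= t -> 0 < lam t)
  (hC0 : 0 < C0) (ha : 0 <= a) (hab : a < b)
  (hint : forall t, t0 <= t ->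
     RInt (fun r => Rpower (tau t0 q lam r) a * Rpower (lam r) (- b)) t0 t <= C0) :
  exists C1 : R, 0 < C1 /\
    forall t, t0 <= t ->
      tau t0 q lam t >= C1 * rpow0 (t - t0) ((q * b + 1) / (b - a)).
Proof.
  set (K0 := / Rpower q q).
  assert (HK0 : 0 < K0) by (apply Rinv_0_lt_compat, Rpower_pos).
  set (le := fun x => lam (Rmax t0 x)).
  assert (lepos : forall x, 0 < le x) by (intros x; apply hpos, Rmax_l).
  assert (lecont : forall x, continuous le x) by (apply cont_ext; auto).
  set (F := fun x => Rpower (le x) (/q)).
  assert (Fpos : forall x, 0 < F x) by (intros; apply Rpower_pos).
  assert (Fcont : forall x, continuous F x).
  { intros x. apply (continuous_comp le (fun y => Rpower y (/q))); auto.
    apply cont_Rpower; auto. }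
  assert (Fint : forall u v, ex_RInt F u v).
  { intros u v. apply (ex_RInt_continuous (V:=R_CompleteNormedModule)). intros; auto. }
  set (T := fun x => t0 + RInt F t0 x).
  assert (Tder : forall x, is_derive T x (F x)).
  { intros x.
    assert (H1 : is_derive (fun y => RInt F t0 y) x (F x)).
    { apply (is_derive_RInt (V:=R_NormedModule) F (fun y => RInt F t0 y) t0); auto. apply filter_forall. intros; apply (RInt_correct (V:=R_CompleteNormedModule)); auto. }
    assert (H2 := is_derive_plus (fun _ => t0) (fun y => RInt F t0 y) x _ _ (is_derive_const t0 x) H1).
    rewrite plus_zero_l in H2. exact H2. }
  assert (Tcont : forall x, continuous T x).
  { intros x. apply (ex_derive_continuous (K:=R_AbsRing) (V:=R_NormedModule)). eexists; apply Tder. }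
  assert (Tge : forall x, t0 <= x -> t0 <= T x).
  { intros x Hx. unfold T. assert (0 <= RInt F t0 x); [|lra].
    apply RInt_ge_0; auto. intros; left; auto. }
  assert (Tt0 : T t0 = t0).
  { unfold T. rewrite RInt_point. unfold zero; simpl; lra. }
  assert (tauE : forall x, t0 <= x -> tau t0 q lam x = K0 * Rpower (T x) q).
  { intros x Hx. unfold tau, T, K0.
    assert (E : RInt (fun r => Rpower (lam r) (/q)) t0 x = RInt F t0 x).
    { apply RInt_ext.
      intros y Hy. rewrite Rmin_left in Hy by lra. rewrite Rmax_right in Hy by lra.
      unfold F, le. rewrite Rmax_right by lra. reflexivity. }
    rewrite E. reflexivity. }
  set (s := q * b).
  assert (Hb : 0 < b) by lra.
  assert (Hs : 0 < s) by (unfold s; nra).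
  set (K := Rpower K0 a).
  assert (HK : 0 < K) by apply Rpower_pos.
  set (P := 2 * C0 / (K * (1 + s))).
  assert (HP : 0 < P).
  { unfold P. apply Rdiv_lt_0_compat. lra. apply Rmult_lt_0_compat; lra. }
  set (e' := q * b / (b - a)).
  set (c4 := (1+s)*(b-a)/(2*s*b) * Rpower P (-/s)).
  assert (Hc4 : 0 < c4).
  { unfold c4. apply Rmult_lt_0_compat. 2: apply Rpower_pos.
    apply Rdiv_lt_0_compat. apply Rmult_lt_0_compat; lra.
    apply Rmult_lt_0_compat; lra. }
  exists (K0 * Rpower c4 e'). split.
  { apply Rmult_lt_0_compat; auto; apply Rpower_pos. }
  intros t Ht. destruct (Req_dec t t0) as [Htt|Htt].
  { subst t. unfold rpow0. destruct Rlt_dec; [lra|]. rewrite tauE by lra.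
    assert (0 < K0 * Rpower (T t0) q) by (apply Rmult_lt_0_compat; auto; apply Rpower_pos).
    lra. }
  assert (Hlt : t0 < t) by lra.
  set (D := t - t0).
  assert (HD : 0 < D) by (unfold D; lra).
  unfold rpow0. destruct Rlt_dec; [|lra].
  set (mu := Rpower P (/s) * Rpower D (-/s)).
  assert (Hmu0 : 0 < mu) by (apply Rmult_lt_0_compat; apply Rpower_pos).
  assert (Hmu : Rpower mu (-s) = D / P).
  { unfold mu. rewrite Rpower_mul2 by apply Rpower_pos. rewrite !Rpower_mult.
    replace (/s * -s) with (-(1)) by (field; lra).
    replace (-/s * -s) with 1 by (field; lra).
    rewrite Rpower_Ropp, !Rpower_1 by lra. field; lra. }
  set (h := fun x => F x * Rpower (T x) (-a/b)).
  set (gH := fun r => Rpower (tau t0 q lam r) a * Rpower (lam r) (-b)).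
  assert (Hpt : forall x, t0 < x < t -> 1 + s <= s*mu*h x + (D/(P*K)) * gH x).
  { intros x Hx.
    assert (HTx : 0 < T x) by (specialize (Tge x); lra).
    set (y := mu * h x).
    assert (Hy : 0 < y).
    { unfold y, h. repeat apply Rmult_lt_0_compat; auto; apply Rpower_pos. }
    assert (Hb1 := bern y s Hy Hs).
    assert (E1 : Rpower y (-s) = D/(P*K) * gH x).
    { unfold y, h, gH. rewrite tauE by lra.
      replace (lam x) with (le x) by (unfold le; rewrite Rmax_right; lra).
      rewrite !Rpower_mul2; try apply Rpower_pos; auto.
      2: apply Rmult_lt_0_compat; auto; apply Rpower_pos.
      rewrite Hmu. unfold F, K. rewrite !Rpower_mult.
      replace (/q * -s) with (-b) by (unfold s; field; lra).
      replace (-a/b * -s) with (q*a) by (unfold s; field; lra).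
      field. split; [apply Rgt_not_eq; exact HK | lra]. }
    rewrite E1 in Hb1. unfold y in Hb1. rewrite Rmult_assoc. lra. }
  set (G := fun x => b/(b-a) * Rpower (T x) ((b-a)/b)).
  assert (HGd : forall x, t0 <= x <= t -> is_derive G x (h x)).
  { intros x Hx.
    assert (HTx : 0 < T x) by (specialize (Tge x); lra).
    apply is_derive_Reals.
    assert (d1 := derivable_pt_lim_comp T (fun y => Rpower y ((b-a)/b)) x (F x) _
      (proj1 (is_derive_Reals _ _ _) (Tder x)) (derivable_pt_lim_power (T x) ((b-a)/b) HTx)).
    assert (d2 := derivable_pt_lim_scal _ (b/(b-a)) x _ d1).
    unfold mult_real_fct, comp in d2.
    replace ((b-a)/b - 1) with (-a/b) in d2 by (field; lra).
    replace (h x) with (b / (b - a) * ((b - a) / b * Rpower (T x) (- a / b) * F x)).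
    exact d2. unfold h. field. lra. }
  assert (Hhc : forall x, t0 <= x <= t -> continuous h x).
  { intros x Hx.
    assert (HTx : 0 < T x) by (specialize (Tge x); lra).
    apply (continuous_mult (U:=R_UniformSpace) (K:=R_AbsRing) F (fun y => Rpower (T y) (-a/b))); auto.
    apply (continuous_comp T (fun z => Rpower z (-a/b))); auto. apply cont_Rpower; auto. }
  assert (HhI : is_RInt h t0 t (G t - G t0)).
  { apply (is_RInt_derive (V:=R_CompleteNormedModule) G h t0 t).
    - intros x Hx. rewrite Rmin_left, Rmax_right in Hx by lra. apply HGd; lra.
    - intros x Hx. rewrite Rmin_left, Rmax_right in Hx by lra. apply Hhc; lra. }
  assert (HgI : ex_RInt gH t0 t).
  { set (gE := fun r => Rpower (K0 * Rpower (T r) q) a * Rpower (le r) (-b)).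
    apply (ex_RInt_ext gE).
    { intros x Hx. rewrite Rmin_left, Rmax_right in Hx by lra.
      unfold gE, gH. rewrite tauE by lra. unfold le. rewrite Rmax_right by lra. reflexivity. }
    apply (ex_RInt_continuous (V:=R_CompleteNormedModule)).
    intros x Hx. rewrite Rmin_left, Rmax_right in Hx by lra.
    assert (HTx : 0 < T x) by (specialize (Tge x); lra).
    apply (continuous_mult (U:=R_UniformSpace) (K:=R_AbsRing)
      (fun r => Rpower (K0 * Rpower (T r) q) a) (fun r => Rpower (le r) (-b))).
    - apply (continuous_comp (fun r => K0 * Rpower (T r) q) (fun z => Rpower z a)).
      + apply (continuous_mult (U:=R_UniformSpace) (K:=R_AbsRing) (fun _ => K0) (fun r => Rpower (T r) q)).
        apply continuous_const.
        apply (continuous_comp T (fun z => Rpower z q)); auto. apply cont_Rpower; auto.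
      + apply cont_Rpower. apply Rmult_lt_0_compat; auto; apply Rpower_pos.
    - apply (continuous_comp le (fun z => Rpower z (-b))); auto. apply cont_Rpower; auto. }
  assert (Hsum : is_RInt (fun x => s*mu*h x + (D/(P*K)) * gH x) t0 t
            (s*mu*(G t - G t0) + (D/(P*K)) * RInt gH t0 t)).
  { apply (is_RInt_plus (V:=R_NormedModule) (fun x => s*mu*h x) (fun x => (D/(P*K)) * gH x)).
    - apply (is_RInt_scal (V:=R_NormedModule) h t0 t (s*mu)); auto.
    - apply (is_RInt_scal (V:=R_NormedModule) gH t0 t (D/(P*K))).
      apply (RInt_correct (V:=R_CompleteNormedModule)); auto. }
  assert (Hle := is_RInt_le (fun _ => 1+s) _ t0 t _ _ (Rlt_le _ _ Hlt)
    (is_RInt_const (V:=R_NormedModule) t0 t (1+s)) Hsum Hpt).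
  change (scal (t - t0) (1 + s)) with ((t-t0)*(1+s)) in Hle.
  assert (HgC := hint t Ht). fold gH in HgC.
  assert (HG0 : 0 <= G t0).
  { unfold G. left. apply Rmult_lt_0_compat. apply Rdiv_lt_0_compat; lra. apply Rpower_pos. }
  assert (Hmain : D*(1+s)/2 <= s*mu*G t).
  { assert (E : D/(P*K) * C0 = D*(1+s)/2).
    { unfold P. field. repeat split; try lra; apply Rgt_not_eq; exact HK. }
    assert (D/(P*K) * RInt gH t0 t <= D/(P*K) * C0).
    { apply Rmult_le_compat_l; auto. left. apply Rdiv_lt_0_compat; auto. apply Rmult_lt_0_compat; auto. }
    assert (0 <= s*mu*G t0) by (apply Rmult_le_pos; auto; left; apply Rmult_lt_0_compat; auto).
    fold D in Hle. nra. }
  rewrite tauE by lra.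
  set (W := Rpower (T t) ((b-a)/b)).
  assert (HX : 0 < s*mu*(b/(b-a))).
  { apply Rmult_lt_0_compat. apply Rmult_lt_0_compat; auto. apply Rdiv_lt_0_compat; lra. }
  assert (HW : c4 * Rpower D (1 + /s) <= W).
  { assert (E : c4 * Rpower D (1 + /s) = D*(1+s)/2 / (s*mu*(b/(b-a)))).
    { unfold c4, mu. rewrite Rpower_plus, Rpower_1 by lra.
      rewrite !Rpower_Ropp.
      assert (0 < Rpower P (/s)) by apply Rpower_pos.
      assert (0 < Rpower D (/s)) by apply Rpower_pos.
      field. repeat split; lra. }
    rewrite E. apply (Rmult_le_reg_l (s*mu*(b/(b-a)))); auto.
    replace (s * mu * (b / (b - a)) * (D * (1 + s) / 2 / (s * mu * (b / (b - a)))))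
      with (D*(1+s)/2) by (field; repeat split; lra).
    unfold G in Hmain. fold W in Hmain. lra. }
  assert (Hpw := Rle_Rpower_l _ _ e' ltac:(unfold e'; left; apply Rdiv_lt_0_compat; nra)
    (conj (Rmult_lt_0_compat _ _ Hc4 (Rpower_pos D (1 + /s))) HW)).
  unfold W in Hpw. rewrite Rpower_mult in Hpw.
  replace ((b - a) / b * e') with q in Hpw by (unfold e'; field; lra).
  rewrite Rpower_mul2 in Hpw by (auto; apply Rpower_pos).
  rewrite Rpower_mult in Hpw.
  replace ((1 + / s) * e') with ((s + 1) / (b - a)) in Hpw by (unfold e', s; field; split; lra).
  rewrite Rmult_assoc. apply Rle_ge, Rmult_le_compat_l; lra.
Qed.
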